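(* Let $K$ be a finite simplicial complex, $f$ an injective filtration function on $K$, $n$ a positive integer, and $\alpha$ an $n$-cycle whose homology class $[\alpha]\in H_n(K^f_a)$ is born at $a$ and terminated at a finite value $b>a$. Let $D=(0,\frac{b-a}{2}]$ and let $\Sigma_\varepsilon$ and $\Pi_\varepsilon$ ($\varepsilon\in D$) be as defined in the context. Then for each $t\in D$ there exists $\delta>0$ such that $\Sigma_\varepsilon$ and $\Pi_\varepsilon$ are constant for $\varepsilon\in(t-\delta,t]\cap D$.
   Context: A filtration function on a finite simplicial complex $K$ is a map $f\colon K\to\mathbb{R}$ with $f(\sigma)\le f(\tau)$ whenever $\sigma$ is a face of $\tau$. Sublevel complexes are $K^f_r=f^{-1}((-\infty,r])$, with inclusions $K^f_q\subseteq K^f_r$ for $q\le r$; homology is taken with coefficients in a fixed field. For a nontrivial class $[\alpha]\in H_n(K^f_r)$, its birth is the infimum of $q\le r$ such that $[\alpha]$ is in the image of $H_n(K^f_q)\to H_n(K^f_r)$, and its termination scale is the infimum of $q\ge r$ such that $[\alpha]$ maps to $0$ in $H_n(K^f_q)$. $\|f-g\|_\infty=\max_{\sigma\in K}|f(\sigma)-g(\sigma)|$. An (injective) $\varepsilon$-perturbation of $f$ is an injective filtration function $g$ on $K$ with $\|f-g\|_\infty\le\varepsilon$. For such $g$, let $\Delta_{g,\alpha}$ denote the simplex $\tau$ of $K$ such that the cycle $\alpha$ is a boundary in $K^g_{g(\tau)}$ but not in $K^g_r$ for any $r<g(\tau)$ (the $(n+1)$-simplex of $K^g$ terminating $[\alpha]$).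 Define $\Sigma_\varepsilon=\{\Delta_{g,\alpha}: g \text{ an injective } \varepsilon\text{-perturbation of } f\}$. Let $\sigma_1,\ldots,\sigma_m$ be the $(n+1)$-dimensional simplices of $K$; each injective filtration function $g$ induces a linear ordering of $\{\sigma_1,\dots,\sigma_m\}$ (by increasing $g$-value), regarded as a permutation in $S_m$. Define $\Pi_\varepsilon$ as the set of all such permutations induced by injective $\varepsilon$-perturbations of $f$. *)

(* Defs.v *)
From HB Require Import structures.
From mathcomp Require Import all_boot all_order all_fingroup all_algebra.
From mathcomp Require Import reals.
Set Implicit Arguments. Unset Strict Implicit. Unset Printing Implicit Defensive.
Import Order.TTheory GRing.Theory Num.Theory.
Local Open Scope ring_scope.

Section Defs.
Variable V : finType.

Definition simplicial_complex (K : {set {set V}}) : Prop :=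
  forall s, s \in K -> s != set0 /\ (forall t : {set V}, t \subset s -> t != set0 -> t \in K).

Definition Kdim (K : {set {set V}}) (j : nat) : {set {set V}} :=
  [set s in K | #|s| == j.+1].

Variable R : realType.

Definition filtration (K : {set {set V}}) (f : {set V} -> R) : Prop :=
  forall s t, s \in K -> t \in K -> t \subset s -> f t <= f s.

Definition injective_on (K : {set {set V}}) (f : {set V} -> R) : Prop :=
  forall s t, s \in K -> t \in K -> f s = f t -> s = t.

Definition sublevel (K : {set {set V}}) (f : {set V} -> R) (r : R) : {set {set V}} :=
  [set s in K | f s <= r].

(* simplicial chains with coefficients in a field F, oriented by the
   enumeration order of V *)
Variable F : fieldType.
Definition chain := {ffun {set V} -> F}.

Definition incidence (s t : {set V}) : F :=
  if (t \subset s) && (#|s| == #|t|.+1) then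
    match [pick v in s :\: t] with
    | Some v => (-1) ^+ #|[set w in s | (enum_rank w < enum_rank v)%N]|
    | None => 0
    end
  else 0.

Definition bd (c : chain) : chain := [ffun t => \sum_s c s * incidence s t].

Definition supported_in (L : {set {set V}}) (k : nat) (c : chain) : Prop :=
  forall s, c s != 0 -> s \in Kdim L k.

Definition is_cycle (L : {set {set V}}) (k : nat) (c : chain) : Prop :=
  supported_in L k c /\ bd c = 0.

Definition is_boundary (L : {set {set V}}) (k : nat) (c : chain) : Prop :=
  exists d : chain, supported_in L k.+1 d /\ bd d = c.

(* [c] in H_k(Lr) lies in the image of H_k(Lq) -> H_k(Lr) *)
Definition in_image (Lq Lr : {set {set V}}) (k : nat) (c : chain) : Prop :=
  exists b : chain, is_cycle Lq k b /\ is_boundary Lr k (c - b).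

Definition is_inf (S : R -> Prop) (x : R) : Prop :=
  (forall y, S y -> x <= y) /\ (forall l, (forall y, S y -> l <= y) -> l <= x).

Definition born_at (K : {set {set V}}) (f : {set V} -> R) (k : nat) (alpha : chain) (a : R) : Prop :=
  is_inf (fun q => q <= a /\ in_image (sublevel K f q) (sublevel K f a) k alpha) a.

Definition terminates_at (K : {set {set V}}) (f : {set V} -> R) (k : nat) (alpha : chain) (a b : R) : Prop :=
  is_inf (fun q => a <= q /\ is_boundary (sublevel K f q) k alpha) b.

Definition perturbation (K : {set {set V}}) (f : {set V} -> R) (eps : R) (g : {set V} -> R) : Prop :=
  [/\ filtration K g, injective_on K g & forall s, s \in K -> `|f s - g s| <= eps].

Definition Delta (K : {set {set V}}) (g : {set V} -> R) (k : nat) (alpha : chain) (tau : {set V}) : Prop :=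
  [/\ tau \in K, is_boundary (sublevel K g (g tau)) k alpha &
      forall r, r < g tau -> ~ is_boundary (sublevel K g r) k alpha].

Definition Sigma (K : {set {set V}}) (f : {set V} -> R) (k : nat) (alpha : chain) (eps : R) (tau : {set V}) : Prop :=
  exists g, perturbation K f eps g /\ Delta K g k alpha tau.

(* the j-simplices sigma_1..sigma_m are indexed by enum_val : 'I_m -> {set V};
   p : 'S_m is the permutation induced by g, i.e. the i-th smallest
   j-simplex under g is sigma_{p i} *)
Definition induced_perm (K : {set {set V}}) (g : {set V} -> R) (j : nat) (p : 'S_#|Kdim K j|) : Prop :=
  forall i i' : 'I_#|Kdim K j|, (i < i')%N ->
    g (enum_val (p i)) < g (enum_val (p i')).

Definition Pi (K : {set {set V}}) (f : {set V} -> R) (k : nat) (eps : R) (p : 'S_#|Kdim K k.+1|) : Prop :=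
  exists g, perturbation K f eps g /\ @induced_perm K g k.+1 p.

End Defs.
Arguments Pi {V R} K f k eps p.
Arguments induced_perm {V R} K g j p.

(* Main.v *)
Require Import Defs.
From HB Require Import structures.
From mathcomp Require Import all_boot all_order all_fingroup all_algebra.
From mathcomp Require Import reals.
From mathcomp Require Import ring lra.
From Stdlib Require Import Classical.
Set Implicit Arguments. Unset Strict Implicit.
Import Order.TTheory GRing.Theory Num.Theory.
Local Open Scope ring_scope.

Section Aux.
Variables (V : finType) (R : realType) (F : fieldType).
Variables (K : {set {set V}}) (f : {set V} -> R).

Definition typ (g : {set V} -> R) : {ffun ({set V} * {set V}) -> bool} :=
  [ffun p => [&& p.1 \in K, p.2 \in K & g p.1 < g p.2]].

Definition AT (T : {ffun ({set V} * {set V}) -> bool}) (e : R) : Prop :=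
  exists g, perturbation K f e g /\ typ g = T.

Lemma pert_mono e1 e2 g : perturbation K f e1 g -> e1 <= e2 -> perturbation K f e2 g.
Proof. by case=> H1 H2 H3 le12; split => // s sK; exact: le_trans (H3 s sK) le12. Qed.

Lemma AT_mono T e1 e2 : AT T e1 -> e1 <= e2 -> AT T e2.
Proof. by move=> [g [Hg Ht]] le12; exists g; split => //; exact: pert_mono le12. Qed.

Lemma sameord_lt g g' u v : typ g = typ g' -> u \in K -> v \in K ->
  (g u < g v) = (g' u < g' v).
Proof.
move=> H uK vK; have := congr1 (fun h : {ffun ({set V} * {set V}) -> bool} => h (u, v)) H.
by rewrite !ffunE /= uK vK.
Qed.

Lemma sameord_le g g' u v : typ g = typ g' -> u \in K -> v \in K ->
  (g u <= g v) = (g' u <= g' v).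
Proof. by move=> H uK vK; rewrite !leNgt (sameord_lt H vK uK). Qed.

Lemma list_max (l : seq R) c : all (fun x => x < c) l ->
  exists r, r < c /\ forall x, x \in l -> x <= r.
Proof.
elim: l => [|x l IH] /=.
  by move=> _; exists (c - 1); split => //; lra.
move=> /andP[xc /IH [r0 [r0c H]]]; exists (Order.max x r0); split.
  by rewrite gt_max xc r0c.
move=> y; rewrite inE => /orP[/eqP->|yl]; rewrite le_max ?lexx //.
by rewrite H ?orbT.
Qed.

Lemma supp_mono (L L' : {set {set V}}) k (d : chain V F) :
  L \subset L' -> supported_in L k d -> supported_in L' k d.
Proof.
move=> sub H s /H; rewrite !inE => /andP[sL ->]; rewrite andbT.
exact: (subsetP sub).
Qed.

Lemma bd_mono (L L' : {set {set V}}) k (c : chain V F) :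
  L \subset L' -> is_boundary L k c -> is_boundary L' k c.
Proof. by move=> sub [d [Hd Hb]]; exists d; split => //; exact: supp_mono Hd. Qed.

Lemma Delta_tr g g' n (alpha : chain V F) tau : typ g = typ g' ->
  Delta K g n alpha tau -> Delta K g' n alpha tau.
Proof.
move=> Ht [tauK Hb Hnb].
have Eq : sublevel K g' (g' tau) = sublevel K g (g tau).
  apply/setP => s; rewrite !inE; case sK: (s \in K) => //=.
  by rewrite (sameord_le Ht sK tauK).
split => //; first by rewrite Eq.
move=> r Hr Hbr.
have Hall : all (fun x => x < g tau) [seq g s | s <- enum [set s in K | g s < g tau]].
  by apply/allP => x /mapP[s]; rewrite mem_enum inE => /andP[_ ?] ->.
have [r' [r'c Hr']] := list_max Hall.
apply: (Hnb r' r'c); apply: bd_mono Hbr; apply/subsetP => s; rewrite !inE.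
case/andP => sK gs; rewrite sK /=; apply: Hr'; apply/mapP; exists s => //.
rewrite mem_enum inE sK /= (sameord_lt Ht sK tauK).
exact: le_lt_trans gs Hr.
Qed.

Lemma perm_tr g g' j p : typ g = typ g' -> induced_perm K g j p -> induced_perm K g' j p.
Proof.
move=> Ht H i i' lii'; have := H i i' lii'.
have inK : forall x : 'I_#|Kdim K j|, enum_val x \in K.
  by move=> x; have := enum_valP x; rewrite inE => /andP[].
by rewrite (sameord_lt Ht (inK _) (inK _)).
Qed.

Hypothesis hf : filtration K f.

Definition gs (g : {set V} -> R) (s : R) := fun x => g x + s * (f x - g x).

Lemma pair_ok (g : {set V} -> R) u v : g u < g v ->
  exists s0, 0 < s0 /\ forall s, 0 < s <= s0 -> gs g s u < gs g s v.
Proof.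
move=> lt; set d := g v - g u; set c := (f v - f u) - d.
have d0 : 0 < d by rewrite subr_gt0.
have dc0 : 0 < d + `|c| by have := normr_ge0 c; lra.
exists (d / (d + `|c|)); split; first by rewrite divr_gt0.
move=> s /andP[s0 ss0].
have H1 : s * (d + `|c|) <= d by rewrite -ler_pdivlMr.
have H2 : - `|c| <= c by rewrite lerNl -normrN ler_norm.
have H3 : s * (- `|c|) <= s * c by rewrite ler_pM2l.
have E : gs g s v - gs g s u = d + s * c by rewrite /gs /c /d; ring.
rewrite -subr_gt0 E; nra.
Qed.

Lemma all_pairs_ok (g : {set V} -> R) : exists s0, 0 < s0 <= 1 /\
  forall u v, g u < g v -> forall s, 0 < s <= s0 -> gs g s u < gs g s v.
Proof.
suff: forall l : seq ({set V} * {set V}), exists s0, 0 < s0 <= 1 /\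
  forall p, p \in l -> g p.1 < g p.2 -> forall s, 0 < s <= s0 -> gs g s p.1 < gs g s p.2.
  case/(_ (enum {: {set V} * {set V}})) => s0 [Hs0 H]; exists s0; split => //.
  by move=> u v; apply: (H (u, v)); rewrite mem_enum.
elim => [|p l [s1 [Hs1 IH]]]; first by exists 1; split => //; rewrite ltr01 lexx.
case: (ltrP (g p.1) (g p.2)) => lt.
  have [s2 [s20 H2]] := pair_ok lt.
  exists (Order.min s1 s2); split.
    by rewrite lt_min s20 ge_min; case/andP: Hs1 => -> ->.
  move=> q; rewrite inE => /orP[/eqP->|ql] lq s /andP[s0 ss].
    by apply: H2; rewrite s0; move: ss; rewrite le_min => /andP[].
  by apply: IH => //; rewrite s0; move: ss; rewrite le_min => /andP[].
exists s1; split => // q; rewrite inE => /orP[/eqP->|ql] lq; last exact: IH.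
by move: lq; rewrite ltNge lt.
Qed.

Lemma openness T e : AT T e -> 0 < e -> exists e'', e'' < e /\ AT T e''.
Proof.
move=> [g [[Hfg Hig Hd] Ht]] e0.
have [s0 [/andP[s00 s01] Hs]] := all_pairs_ok g.
have ord : forall u v, u \in K -> v \in K -> (gs g s0 u < gs g s0 v) = (g u < g v).
  move=> u v uK vK; case: (ltgtP (g u) (g v)) => h.
  - by apply: Hs => //; rewrite s00 lexx.
  - by apply/negbTE; rewrite -leNgt ltW // Hs // s00 lexx.
  - by rewrite (Hig _ _ uK vK h) ltxx.
exists ((1 - s0) * e); split; first by nra.
exists (gs g s0); split; last first.
  rewrite -Ht; apply/ffunP => -[u v]; rewrite !ffunE /=.
  case uK: (u \in K) => //; case vK: (v \in K) => //=; exact: ord.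
split.
- move=> u v uK vK sub; have h1 := Hfg u v uK vK sub; have h2 := hf uK vK sub.
  rewrite /gs.
  have E : g u + s0 * (f u - g u) = (1 - s0) * g u + s0 * f u by ring.
  have E' : g v + s0 * (f v - g v) = (1 - s0) * g v + s0 * f v by ring.
  rewrite E E'; apply: lerD; first by apply: ler_wpM2l => //; lra.
  by apply: ler_wpM2l => //; exact: ltW.
- move=> u v uK vK E; apply: Hig => //.
  case: (ltgtP (g u) (g v)) => h //.
  + by move: h; rewrite -(ord _ _ uK vK) E ltxx.
  + by move: h; rewrite -(ord _ _ vK uK) E ltxx.
- move=> x xK; have E : f x - gs g s0 x = (1 - s0) * (f x - g x) by rewrite /gs; ring.
  rewrite E normrM ger0_norm; last by lra.
  by apply: ler_wpM2l => //; [lra | exact: Hd].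
Qed.

Lemma delta_ex t : 0 < t -> exists delta, 0 < delta /\ forall T, AT T t -> AT T (t - delta).
Proof.
move=> t0.
suff: forall l : seq {ffun ({set V} * {set V}) -> bool}, exists delta, 0 < delta /\
  forall T, T \in l -> AT T t -> AT T (t - delta).
  case/(_ (enum {: {ffun ({set V} * {set V}) -> bool}})) => d [d0 H].
  by exists d; split => // T; apply: H; rewrite mem_enum.
elim => [|T l [d0 [d00 IH]]]; first by exists 1; split => //; rewrite ltr01.
case: (classic (AT T t)) => hT.
  have [e'' [lt Ae]] := openness hT t0.
  exists (Order.min d0 (t - e'')); split.
    by rewrite lt_min d00 subr_gt0 lt.
  move=> T'; rewrite inE => /orP[/eqP->|Tl] hT'.
    apply: AT_mono Ae _; have : Order.min d0 (t - e'') <= t - e'' by rewrite ge_min lexx orbT.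
    lra.
  apply: AT_mono (IH _ Tl hT') _.
  have : Order.min d0 (t - e'') <= d0 by rewrite ge_min lexx.
  lra.
exists d0; split => // T'; rewrite inE => /orP[/eqP->|Tl] hT'; last exact: IH.
by [].
Qed.

End Aux.

Theorem lemma3p1 (V : finType) (R : realType) (F : fieldType)
  (K : {set {set V}}) (f : {set V} -> R) (n : nat) (alpha : chain V F) (a b : R) :
  simplicial_complex K -> filtration K f -> injective_on K f -> (0 < n)%N ->
  is_cycle (sublevel K f a) n alpha -> ~ is_boundary (sublevel K f a) n alpha ->
  born_at K f n alpha a -> terminates_at K f n alpha a b -> a < b ->
  forall t : R, 0 < t <= (b - a) / 2 ->
  exists delta : R, 0 < delta /\
    forall e e' : R,
      t - delta < e <= t -> 0 < e <= (b - a) / 2 ->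
      t - delta < e' <= t -> 0 < e' <= (b - a) / 2 ->
      (forall tau, Sigma K f n alpha e tau <-> Sigma K f n alpha e' tau) /\
      (forall p, Pi K f n e p <-> Pi K f n e' p).
Proof.
move=> _ hf _ _ _ _ _ _ _ t /andP[t0 _].
have [d [d0 Hd]] := delta_ex hf t0.
have key : forall e e' g, t - d < e' -> e <= t -> perturbation K f e g ->
    exists g', perturbation K f e' g' /\ typ K g = typ K g'.
  move=> e e' g h1 h2 Hg.
  have : AT K f (typ K g) t by apply: AT_mono h2; exists g.
  move=> /Hd [g' [Hg' Ht]]; exists g'; split; last by [].
  by apply: pert_mono Hg' _; apply: ltW.
have dir : forall e e', t - d < e' -> e <= t ->
    (forall tau, Sigma K f n alpha e tau -> Sigma K f n alpha e' tau) /\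
    (forall p, Pi K f n e p -> Pi K f n e' p).
  move=> e e' h1 h2; split.
    move=> tau [g [Hg HD]]; have [g' [Hg' Ht]] := key _ _ _ h1 h2 Hg.
    by exists g'; split => //; exact: Delta_tr Ht HD.
  move=> p [g [Hg HD]]; have [g' [Hg' Ht]] := key _ _ _ h1 h2 Hg.
  by exists g'; split => //; exact: perm_tr Ht HD.
exists d; split => // e e' /andP[e1 e2] _ /andP[e1' e2'] _.
have [A1 B1] := dir e e' e1' e2; have [A2 B2] := dir e' e e1 e2'.
by split => x; split; [apply: A1 | apply: A2 | apply: B1 | apply: B2].
Qed.
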